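(* Let $M\in\{0,1\}^{m\times n}$, $N=m+n$, $p=|M|/(mn)$, and let $A$ be the symmetrization of $M$ with eigenvalues $\lambda_1\geq\dots\geq\lambda_N$ and an orthonormal basis of corresponding eigenvectors $v_1,\dots,v_N$ chosen so that $v_i(j)=f(j)\,v_{N+1-i}(j)$ for all $i,j\in[N]$, where $f(j)=1$ for $j\in[m]$ and $f(j)=-1$ for $j\in[m+1,N]$. Let $a_1,\dots,a_N\geq 0$ and $X=\sum_{i=1}^N a_i v_iv_i^T$. Then $$\operatorname{disc}(X)\geq \sum_{i=1}^N a_i\lambda_i-\frac{pN}{2}\max_i(a_i+a_{N+1-i}).$$
   Context: $|M|$ is the number of $1$ entries of $M$. The symmetrization of $M$ is the symmetric matrix $A\in\mathbb{R}^{N\times N}$ with $A_{i,j+m}=A_{j+m,i}=M_{i,j}$ for $(i,j)\in[m]\times[n]$ and all other entries $0$ (the adjacency matrix of the bipartite graph of $M$); its spectrum is symmetric, $\lambda_i=-\lambda_{N+1-i}$, and eigenvectors can be chosen with the stated sign relation. $L\in\mathbb{R}^{N\times N}$ is the adjacency matrix of the complete bipartite graph with parts $[m]$ and $[m+1,N]$. For $X\in\mathbb{R}^{N\times N}$, $\operatorname{disc}(X)=\langle X,A\rangle-p\langle X,L\rangle$ with $\langle\cdot,\cdot\rangle$ the entrywise inner product. *)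

(* Defs.v *)
From HB Require Import structures.
From mathcomp Require Import all_boot all_order all_algebra.
Set Implicit Arguments. Unset Strict Implicit. Unset Printing Implicit Defensive.
Import Order.TTheory GRing.Theory Num.Theory.
Local Open Scope ring_scope.

Section Defs.
Variable R : realFieldType.

Definition symmetrization (m n : nat) (M : 'M[R]_(m, n)) : 'M[R]_(m + n) :=
  block_mx 0 M M^T 0.

Definition Kbip (m n : nat) : 'M[R]_(m + n) :=
  block_mx 0 (const_mx 1) (const_mx 1) 0.

Definition ones_count (m n : nat) (M : 'M[R]_(m, n)) : R :=
  \sum_(i < m) \sum_(j < n) M i j.

Definition density (m n : nat) (M : 'M[R]_(m, n)) : R :=
  ones_count M / (m * n)%:R.

Definition mxinner (k : nat) (X Y : 'M[R]_k) : R :=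
  \sum_(i < k) \sum_(j < k) X i j * Y i j.

Definition disc (m n : nat) (M : 'M[R]_(m, n)) (X : 'M[R]_(m + n)) : R :=
  mxinner X (symmetrization M) - density M * mxinner X (Kbip m n).

(* f(j) = 1 for j in [m], -1 for j in [m+1, N] (0-based: j < m) *)
Definition fsign (m n : nat) (j : 'I_(m + n)) : R :=
  if (j < m)%N then 1 else -1.

End Defs.

(* Main.v *)
Require Import Defs.
From HB Require Import structures.
From mathcomp Require Import all_boot all_order all_algebra ring lra.
Import Order.TTheory GRing.Theory Num.Theory.
Local Open Scope ring_scope.

Section Aux.
Variable R : realFieldType.

Lemma inner_expand (N : nat) (v : 'I_N -> 'cV[R]_N) (a : 'I_N -> R) (Y : 'M[R]_N) :
  mxinner (\sum_(i < N) a i *: (v i *m (v i)^T)) Y =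
  \sum_(i < N) a i * \sum_(j < N) \sum_(k < N) v i j 0 * v i k 0 * Y j k.
Proof.
rewrite /mxinner.
under eq_bigr => j _ do under eq_bigr => k _ do
  rewrite summxE mulr_suml.
under eq_bigr => j _ do rewrite exchange_big /=.
rewrite exchange_big /=; apply: eq_bigr => i _.
rewrite mulr_sumr; apply: eq_bigr => j _; rewrite mulr_sumr; apply: eq_bigr => k _.
rewrite !mxE big_ord1 !mxE; ring.
Qed.

Lemma Kbip_entry (m n : nat) (j k : 'I_(m + n)) :
  Kbip R m n j k = (1 - fsign R j * fsign R k) / 2.
Proof.
rewrite /Kbip /fsign.
rewrite -(splitK j) -(splitK k); case: (split j) => j'; case: (split k) => k' /=;
  rewrite ?block_mxEul ?block_mxEur ?block_mxEdl ?block_mxEdr ?mxE /=.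
- rewrite (ltn_ord j') (ltn_ord k'); field.
all: rewrite ?ltn_ord ?ltnNge ?leq_addr /=; try done. all: try field. all: done.
Qed.

End Aux.

Theorem lemma3p1 (R : realFieldType) (m n : nat) (M : 'M[R]_(m, n))
  (lambda : 'I_(m + n) -> R) (v : 'I_(m + n) -> 'cV[R]_(m + n))
  (a : 'I_(m + n) -> R) :
  (forall i j, M i j = 0 \/ M i j = 1) ->
  (* v i is an eigenvector of the symmetrization with eigenvalue lambda i *)
  (forall i, symmetrization M *m v i = lambda i *: v i) ->
  (* orthonormality *)
  (forall i j, (v i)^T *m v j = ((i == j)%:R)%:M) ->
  (* lambda_1 >= ... >= lambda_N *)
  (forall i j : 'I_(m + n), (i <= j)%N -> lambda j <= lambda i) ->
  (* v_i(j) = f(j) v_{N+1-i}(j) *)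
  (forall i j, v i j 0 = @fsign R m n j * v (rev_ord i) j 0) ->
  (forall i, 0 <= a i) ->
  @disc R m n M (\sum_(i < m + n) a i *: (v i *m (v i)^T))
    >= \sum_(i < m + n) a i * lambda i
       - density M * (m + n)%:R / 2
         * \big[Num.max/0]_(i < m + n) (a i + a (rev_ord i)).
Proof.
move=> H01 Heig Horth _ Hrev Ha.
have vv : forall i, \sum_(j < m + n) v i j 0 * v i j 0 = 1.
  move=> i; move/matrixP: (Horth i i) => /(_ 0 0); rewrite !mxE eqxx.
  move=> h; apply: etrans _ (etrans h _); first by apply: eq_bigr => j _; rewrite mxE.
  by rewrite /= mulr1n.
have HA : forall i, \sum_(j < m + n) \sum_(k < m + n) v i j 0 * v i k 0 * symmetrization M j k
    = lambda i.
  move=> i; transitivity (\sum_(j < m + n) v i j 0 * (symmetrization M *m v i) j 0).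
    apply: eq_bigr => j _; rewrite mxE mulr_sumr; apply: eq_bigr => k _; ring.
  rewrite Heig; under eq_bigr => j _ do rewrite mxE.
  rewrite -[RHS]mulr1 -(vv i) mulr_sumr; apply: eq_bigr => j _; ring.
have Hf2 : forall j : 'I_(m + n), fsign R j * fsign R j = 1.
  by move=> j; rewrite /fsign; case: ifP => _; rewrite ?mulr1 ?mulrNN ?mulr1.
have Hrv : forall i j, fsign R j * v i j 0 = v (rev_ord i) j 0.
  move=> i j; rewrite [in LHS]Hrev mulrA Hf2 mul1r //.
set s := fun i => \sum_(j < m + n) v i j 0.
have HL : forall i, \sum_(j < m + n) \sum_(k < m + n) v i j 0 * v i k 0 * Kbip R m n j k
    = (s i ^+ 2 - s (rev_ord i) ^+ 2) / 2.
  move=> i; rewrite /s !expr2 !mulr_suml.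
  under eq_bigr => j _ do under eq_bigr => k _ do rewrite Kbip_entry.
  rewrite mulrBl !mulr_suml -sumrB; apply: eq_bigr => j _.
  rewrite !mulr_sumr !mulr_suml -sumrB; apply: eq_bigr => k _.
  rewrite -!Hrv; ring.
(* Parseval *)
pose V : 'M[R]_(m + n) := \matrix_(j, i) v i j 0.
have VtV : V^T *m V = 1%:M.
  apply/matrixP => i k; rewrite !mxE.
  move/matrixP: (Horth i k) => /(_ 0 0); rewrite !mxE eqxx mulr1n => <-.
  by apply: eq_bigr => j _; rewrite !mxE.
have VVt := mulmx1C VtV.
have Hpars : \sum_(i < m + n) s i ^+ 2 = (m + n)%:R.
  transitivity (\sum_(j < m + n) \sum_(k < m + n) (V *m V^T) j k).
    rewrite /s; under eq_bigr => i _ do rewrite expr2 mulr_suml.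
    under eq_bigr => i _ do under eq_bigr => j _ do rewrite mulr_sumr.
    rewrite exchange_big /=; apply: eq_bigr => j _.
    rewrite exchange_big /=; apply: eq_bigr => k _.
    rewrite !mxE; apply: eq_bigr => i _; rewrite !mxE.
    done.
  rewrite VVt; transitivity (\sum_(j < m + n) (1:R)); last by rewrite sumr_const card_ord.
  apply: eq_bigr => j _; rewrite (bigD1 j) //= big1.
    by rewrite mxE eqxx addr0.
  by move=> k hk; rewrite mxE eq_sym (negPf hk).
have p0 : 0 <= density M.
  rewrite /density /ones_count divr_ge0 ?ler0n //.
  apply: sumr_ge0 => i _; apply: sumr_ge0 => j _.
  by case: (H01 i j) => ->; rewrite ?lexx ?ler01.
set Mx := \big[Num.max/0]_(i < m + n) (a i + a (rev_ord i)).
have HMx : forall i, a i + a (rev_ord i) <= Mx.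
  move=> i; rewrite /Mx (bigD1 i) //= le_max lexx //.
rewrite /disc !inner_expand.
have E1 : \sum_(i < m + n) a i * (\sum_(j < m + n) \sum_(k < m + n)
     v i j 0 * v i k 0 * symmetrization M j k) = \sum_(i < m + n) a i * lambda i.
  by apply: eq_bigr => i _; rewrite HA.
have E2 : \sum_(i < m + n) a i * (\sum_(j < m + n) \sum_(k < m + n)
     v i j 0 * v i k 0 * Kbip R m n j k) =
   \sum_(i < m + n) a i * ((s i ^+ 2 - s (rev_ord i) ^+ 2) / 2).
  by apply: eq_bigr => i _; rewrite HL.
rewrite E1 E2.
rewrite lerB // (_ : density M * (m + n)%:R / 2 * Mx = density M * ((m + n)%:R / 2 * Mx));
  last by rewrite !mulrA.
apply: ler_wpM2l => //.
apply: (@le_trans _ _ (\sum_(i < m + n) (a i + a (rev_ord i)) * s i ^+ 2 / 2)).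
  apply: ler_sum => i _.
  have h1 : 0 <= a i * s (rev_ord i) ^+ 2 by rewrite mulr_ge0 ?sqr_ge0.
  have h2 : 0 <= a (rev_ord i) * s i ^+ 2 by rewrite mulr_ge0 ?sqr_ge0.
  nra.
apply: (@le_trans _ _ (\sum_(i < m + n) Mx * s i ^+ 2 / 2)).
  apply: ler_sum => i _; rewrite ler_wpM2r ?invr_ge0 ?ler0n //.
  by rewrite ler_wpM2r ?sqr_ge0.
rewrite -mulr_suml -mulr_sumr Hpars; lra.
Qed.
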